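(* Let $n\ge3$, $1<\alpha\le\sqrt2$, $\overline\alpha=\sqrt{2-\alpha^2}$. Then the center density of $D_n^\alpha$ is $$\delta(D_n^\alpha)=\frac{1}{2^{n/2}\alpha^{n-3}(\alpha^3+\overline\alpha^3)}.$$
   Context: Let $\mathbf{e}_1,\dots,\mathbf{e}_n$ be the standard basis of $\mathbb{R}^n$. For $n\ge3$, $1\le\alpha\le\sqrt2$ and $\overline\alpha:=\sqrt{2-\alpha^2}$, $D_n^\alpha$ is the lattice with basis $\mathbf{b}_1=\alpha\mathbf{e}_1+\overline\alpha\mathbf{e}_2$, $\mathbf{b}_2=\alpha\mathbf{e}_2+\overline\alpha\mathbf{e}_3$, $\mathbf{b}_3=\overline\alpha\mathbf{e}_1+\alpha\mathbf{e}_3$, $\mathbf{b}_4=\overline\alpha\mathbf{e}_3-\alpha\mathbf{e}_4$, and $\mathbf{b}_k=\overline\alpha\mathbf{e}_{k-1}-\alpha\mathbf{e}_k$ for $5\le k\le n$. Center density: $\delta(\Lambda)=\lambda_1(\Lambda)^n/(2^n\operatorname{vol}(\Lambda))$. *)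

(* Defs.v *)
From HB Require Import structures.
From mathcomp Require Import all_boot all_order all_algebra.
From mathcomp Require Import boolp classical_sets reals.
Set Implicit Arguments. Unset Strict Implicit. Unset Printing Implicit Defensive.
Import Order.TTheory GRing.Theory Num.Theory.
Local Open Scope ring_scope.
Local Open Scope classical_set_scope.

Section Dna.
Variable R : realType.

Definition abar (a : R) : R := Num.sqrt (2 - a ^+ 2).

(* Coordinate j (1-based) of basis vector b_k (1-based) of D_n^a. *)
Definition Dentry (a : R) (k j : nat) : R :=
  if k == 1%N then (if j == 1%N then a else if j == 2%N then abar a else 0)
  else if k == 2%N then (if j == 2%N then a else if j == 3%N then abar a else 0)
  else if k == 3%N then (if j == 1%N then abar a else if j == 3%N then a else 0)
  else (if j == k.-1 then abar a else if j == k then - a else 0).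

(* Basis matrix: row i is b_{i+1}, in coordinates w.r.t. e_1..e_n. *)
Definition Dbasis (n : nat) (a : R) : 'M[R]_n :=
  \matrix_(i < n, j < n) Dentry a i.+1 j.+1.

Definition lattice (n : nat) (B : 'M[R]_n) : set 'rV[R]_n :=
  [set v | exists z : 'I_n -> int, v = \sum_(i < n) (z i)%:~R *: row i B].

Definition enorm (n : nat) (v : 'rV[R]_n) : R :=
  Num.sqrt (\sum_(j < n) v 0 j ^+ 2).

Definition lambda1 (n : nat) (B : 'M[R]_n) : R :=
  inf [set enorm v | v in [set v | lattice B v /\ v != 0]].

Definition covol (n : nat) (B : 'M[R]_n) : R := `|\det B|.

Definition center_density (n : nat) (B : 'M[R]_n) : R :=
  lambda1 B ^+ n / (2 ^+ n * covol B).

End Dna.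

(* Main.v *)
Require Import Defs.
From HB Require Import structures.
From mathcomp Require Import all_boot all_order all_algebra.
From mathcomp Require Import boolp classical_sets reals.
From mathcomp Require Import ring lra zify.
Set Implicit Arguments. Unset Strict Implicit. Unset Printing Implicit Defensive.
Import Order.TTheory GRing.Theory Num.Theory.
Local Open Scope ring_scope.

Definition pidx (j : nat) : nat :=
  match j with 0 => 2 | 1 => 0 | 2 => 1 | _ => j.+1 end%N.

Lemma split3 (V : zmodType) m (G : nat -> V) :
  \sum_(j < m.+3) G j = G 0%N + G 1%N + G 2%N + \sum_(k < m) G k.+3.
Proof. by rewrite !big_ord_recl /= !addrA. Qed.

Lemma tele (f : nat -> int) m : \sum_(k < m) (f k - f k.+1) = f 0%N - f m.
Proof.
elim: m => [|m IH]; first by rewrite big_ord0 subrr.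
by rewrite big_ord_recr /= IH addrA subrK.
Qed.

Lemma id1 (u v : int) : 2 * (- u * (- u + v)) = (u - v) ^+ 2 + (u ^+ 2 - v ^+ 2).
Proof. ring. Qed.

Lemma ev (x : int) : (2 %| x ^+ 2 - x)%Z.
Proof.
have h1 := modz_ge0 x (isT : (2:int) != 0).
have h2 := ltz_pmod x (isT : (0:int) < 2).
have h := divz_eq x 2.
move: h1 h2 h; set q := (x %/ 2)%Z; set r := (x %% 2)%Z => h1 h2 ->.
have [->|->] : r = 0 \/ r = 1 by lia.
  by apply/dvdzP; exists (q * (q * 2 - 1)); ring.
by apply/dvdzP; exists (q * (q * 2 + 1)); ring.
Qed.

Lemma id2 (u v : int) : (- u + v) = - (u - v).
Proof. ring. Qed.
Lemma id3 (w : int) : w ^+ 2 = w + (w ^+ 2 - w).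
Proof. ring. Qed.

Section Y.
Variables (m : nat) (y : nat -> int).
Hypothesis hy : y m.+3 = 0.

Definition Pz j : int := (if (j < 3)%N then 1 else -1) * y j.
Definition Qz j : int := y (pidx j) + (if j == 2%N then y 3 else 0).

Lemma PzS k : Pz k.+3 = - y k.+3.
Proof. by rewrite /Pz mulN1r. Qed.
Lemma QzS k : Qz k.+3 = y k.+4.
Proof. by rewrite /Qz /= addr0. Qed.

Lemma tail0 : (forall k, (k < m)%N -> y k.+3 = y k.+4) ->
  forall k, (k <= m)%N -> y k.+3 = 0.
Proof.
move=> h.
suff H : forall d k, (k + d)%N = m -> y k.+3 = 0.
  by move=> k km; apply: (H (m - k)%N); rewrite subnKC.
elim=> [|d IH] k hk; first by rewrite addn0 in hk; rewrite hk.
rewrite h; last by rewrite -hk; lia.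
by apply: IH; rewrite -hk; lia.
Qed.

Lemma allzero : y 0%N = 0 -> y 1%N = 0 -> y 2%N = 0 ->
  (forall k, (k <= m)%N -> y k.+3 = 0) -> forall i, (i < m.+3)%N -> y i = 0.
Proof.
by move=> h0 h1 h2 ht [|[|[|i]]] hi //; apply: ht; lia.
Qed.

Hypothesis ynz : exists i, (i < m.+3)%N /\ y i != 0.

Lemma F1 : 1 <= \sum_(j < m.+3) Pz j ^+ 2.
Proof.
case: ynz => i [hi nz].
rewrite (bigD1 (Ordinal hi)) //=.
have h1 : 1 <= Pz i ^+ 2.
  rewrite /Pz; case: ifP => _; rewrite ?mul1r ?mulN1r ?sqrrN;
  move: nz; case: (y i) => [[|k]|k] //= _; lia.
have h2 : 0 <= \sum_(j < m.+3 | j != Ordinal hi) Pz j ^+ 2.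
  by apply: sumr_ge0 => j _; apply: sqr_ge0.
by apply: (le_trans h1); rewrite lerDl.
Qed.


Lemma F2id : 2 * \sum_(j < m.+3) Pz j * (Pz j + Qz j) =
  y 0%N ^+ 2 + y 1%N ^+ 2 + (y 0%N + y 1%N + y 2%N) ^+ 2 + (y 2%N + y 3%N) ^+ 2
  + \sum_(k < m) (y k.+3 - y k.+4) ^+ 2.
Proof.
rewrite mulr_sumr (split3 _ (fun j => 2 * (Pz j * (Pz j + Qz j)))).
have -> : \sum_(k < m) 2 * (Pz k.+3 * (Pz k.+3 + Qz k.+3)) =
   \sum_(k < m) (y k.+3 - y k.+4) ^+ 2 + \sum_(k < m) (y k.+3 ^+ 2 - y k.+4 ^+ 2).
  rewrite -big_split; apply: eq_bigr => k _; rewrite PzS QzS.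
  by rewrite id1.
rewrite (tele (fun k => y k.+3 ^+ 2)) hy /Pz /Qz /=.
ring.
Qed.

Lemma sqr_eq0_int (x : int) : x ^+ 2 = 0 -> x = 0.
Proof. by move/eqP; rewrite sqrf_eq0 => /eqP. Qed.

Lemma F2 : 1 <= \sum_(j < m.+3) Pz j * (Pz j + Qz j).
Proof.
set S := \sum_(j < m.+3) _.
have hS := F2id; rewrite -/S in hS.
set T := \sum_(k < m) _ in hS.
have hT : 0 <= T by apply: sumr_ge0 => k _; apply: sqr_ge0.
have a0 := sqr_ge0 (y 0%N); have a1 := sqr_ge0 (y 1%N).
have a2 := sqr_ge0 (y 0%N + y 1%N + y 2%N); have a3 := sqr_ge0 (y 2%N + y 3%N).
rewrite leNgt; apply/negP => hlt.
have hS0 : S <= 0 by lia.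
have e0 : y 0%N = 0 by apply: sqr_eq0_int; lia.
have e1 : y 1%N = 0 by apply: sqr_eq0_int; lia.
have e2' : (y 0%N + y 1%N + y 2%N) = 0 by apply: sqr_eq0_int; lia.
have e3' : (y 2%N + y 3%N) = 0 by apply: sqr_eq0_int; lia.
have eT : T = 0 by lia.
have ht : forall k, (k < m)%N -> y k.+3 = y k.+4.
  move=> k km; apply/eqP; rewrite -subr_eq0; apply/eqP/sqr_eq0_int.
  have := psumr_eq0P _ eT.
  have hn : forall i : 'I_m, true -> 0 <= (y i.+3 - y i.+4) ^+ 2 by move=> i _; apply: sqr_ge0.
  by move/(_ hn (Ordinal km) isT).
have ht0 := tail0 ht.
case: ynz => i [hi]; rewrite (allzero _ _ _ ht0 hi) ?eqxx //; lia.
Qed.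

Definition w j := Pz j + Qz j.

Lemma sumw : \sum_(j < m.+3) w j = 2 * (y 0%N + y 1%N + y 2%N).
Proof.
rewrite (split3 _ w).
have -> : \sum_(k < m) w k.+3 = - \sum_(k < m) (y k.+3 - y (k.+1).+3).
  by rewrite -sumrN; apply: eq_bigr => k _; rewrite /w PzS QzS id2.
rewrite (tele (fun k => y k.+3)) hy /w /Pz /Qz /=.
ring.
Qed.

Lemma F3 : 2 <= \sum_(j < m.+3) w j ^+ 2.
Proof.
have hsplit : \sum_(j < m.+3) w j ^+ 2 =
    \sum_(j < m.+3) w j + \sum_(j < m.+3) (w j ^+ 2 - w j).
  by rewrite -big_split; apply: eq_bigr => j _; rewrite /= -id3.
have hd : (2 %| \sum_(j < m.+3) (w j ^+ 2 - w j))%Z.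
  by apply: rpred_sum => j _; apply: ev.
case/dvdzP: hd => q hq.
rewrite sumw hq in hsplit.
set S := \sum_(j < m.+3) _ in hsplit *.
suff : S != 0 by move=> nz; have: 0 <= S by [apply: sumr_ge0 => j _; apply: sqr_ge0]; lia.
apply/negP => /eqP S0.
have hw : forall j, (j < m.+3)%N -> w j = 0.
  move=> j hj; apply: sqr_eq0_int.
  have := psumr_eq0P _ S0.
  have hn : forall i : 'I_m.+3, true -> 0 <= w i ^+ 2 by move=> i _; apply: sqr_ge0.
  by move/(_ hn (Ordinal hj) isT).
have ht : forall k, (k < m)%N -> y k.+3 = y k.+4.
  move=> k km; have := hw k.+3; rewrite /w PzS QzS; move/(_ _)=> h.
  have := h ltac:(lia); lia.
have ht0 := tail0 ht.
have w0 := hw 0%N isT; have w1 := hw 1%N isT; have w2 := hw 2%N isT.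
rewrite /w /Pz /Qz /= in w0 w1 w2.
have y3 := ht0 0%N isT.
case: ynz => i [hi]; rewrite (allzero _ _ _ ht0 hi) ?eqxx //; lia.
Qed.
End Y.

Section S.
Variable R : realType.

Definition dr (j : nat) : R := if (j < 3)%N then 1 else -1.

Lemma Dentry_dec (a : R) (i j : nat) : Dentry a i.+1 j.+1 =
  (if i == j then a * dr j else 0) + (if i == pidx j then abar a else 0)
  + (if (j == 2%N) && (i == 3%N) then abar a else 0).
Proof.
rewrite /Dentry /dr.
case: i => [|[|[|[|i]]]]; case: j => [|[|[|[|j]]]] /=; rewrite ?mulr1 ?addr0 ?add0r ?mulrN1 //.
  by rewrite !eqSS eq_sym.
rewrite !eqSS [j.+1 == i]eq_sym [j == i]eq_sym.
have [->|ne] := eqVneq i j.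
  by rewrite (ltn_eqF (ltnSn j)) addr0.
by rewrite add0r.
Qed.

Section Z.
Variables (n : nat) (z : 'I_n -> int).
Definition zz (k : nat) : int := oapp z 0 (insub k : option 'I_n).
Lemma zzE (i : 'I_n) : zz i = z i.
Proof. by rewrite /zz valK. Qed.
Lemma zz0 k : (n <= k)%N -> zz k = 0.
Proof. by move=> h; rewrite /zz insubF // ltnNge h. Qed.

Lemma sum_delta (F : nat -> R) k : ((n <= k)%N -> F k = 0) ->
  \sum_(i < n) (if (i:nat) == k then F i else 0) = F k.
Proof.
case: (ltnP k n) => h hF.
  rewrite (bigD1 (Ordinal h)) //= eqxx big1 ?addr0 // => i /negbTE ne.
  by rewrite -val_eqE /= in ne; rewrite ne.
rewrite big1 ?hF // => i _; rewrite ifN //.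
by apply: contraTneq (ltn_ord i) => ->; rewrite -leqNgt.
Qed.

Lemma sum_delta' (x : R) k :
  \sum_(i < n) (zz i)%:~R * (if (i:nat) == k then x else 0) = (zz k)%:~R * x.
Proof.
rewrite -(@sum_delta (fun i => (zz i)%:~R * x) k); last by move=> h; rewrite zz0 // mul0r.
by apply: eq_bigr => i _; case: ifP; rewrite ?mulr0.
Qed.

Lemma coordE (a : R) (j : 'I_n) :
  (\sum_(i < n) (z i)%:~R *: row i (Dbasis n a)) 0 j =
  a * dr j * (zz j)%:~R + abar a * (zz (pidx j))%:~R
  + (if (j : nat) == 2%N then abar a * (zz 3)%:~R else 0).
Proof.
rewrite summxE.
under eq_bigr => i _ do rewrite !mxE Dentry_dec -zzE !mulrDr.
rewrite !big_split /= !sum_delta' (mulrC (zz j)%:~R) (mulrC (zz (pidx j))%:~R).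
have [j2|j2] := eqVneq (j : nat) 2%N.
  rewrite (eq_bigr (fun i : 'I_n => (zz i)%:~R * (if (i:nat) == 3%N then abar a else 0))) //.
  by rewrite sum_delta' (mulrC (zz 3)%:~R).
by rewrite big1 // => i _; rewrite mulr0.
Qed.
End Z.
End S.
Lemma key (R : realType) (a : R) m (z : 'I_m.+3 -> int) :
  1 < a -> a <= Num.sqrt 2 -> (exists i, z i != 0) ->
  2 <= \sum_(j < m.+3) ((\sum_(i < m.+3) (z i)%:~R *: row i (Dbasis m.+3 a)) 0 j) ^+ 2.
Proof.
move=> ha1 ha2 [i0 nz].
set y := zz z.
have hy : y m.+3 = 0 := zz0 z (leqnn _).
have ynz : exists i, (i < m.+3)%N /\ y i != 0 by exists i0; rewrite /y zzE.
set c := abar a.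
have e : forall j : nat, a * dr R j * (y j)%:~R + c * (y (pidx j))%:~R
   + (if j == 2%N then c * (y 3%N)%:~R else 0) = a * (Pz y j)%:~R + c * (Qz y j)%:~R.
  move=> j; rewrite /Pz /Qz /dr intrM intrD.
  case: (j < 3)%N; case: (j == 2%N); rewrite ?intrN /= ?mulr0 ?addr0; ring.
under eq_bigr => j _ do rewrite coordE e.
set P := fun j : nat => (Pz y j)%:~R : R.
set Q := fun j : nat => (Qz y j)%:~R : R.
have h1 : 1 <= \sum_(j < m.+3) P j ^+ 2.
  have := F1 ynz; rewrite -(ler_int R) rmorph_sum /=.
  by under eq_bigr => j _ do rewrite rmorphXn.
have h2 : 1 <= \sum_(j < m.+3) P j * (P j + Q j).
  have := F2 hy ynz; rewrite -(ler_int R) rmorph_sum /=.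
  by under eq_bigr => j _ do rewrite rmorphM rmorphD.
have h3 : 2 <= \sum_(j < m.+3) (P j + Q j) ^+ 2.
  have := F3 hy ynz; rewrite -(ler_int R) rmorph_sum /=.
  by under eq_bigr => j _ do rewrite rmorphXn rmorphD.
set X := \sum_(j < m.+3) P j ^+ 2 in h1 *.
set Qs := \sum_(j < m.+3) Q j ^+ 2.
set W := \sum_(j < m.+3) P j * Q j.
have E1 : \sum_(j < m.+3) (a * P j + c * Q j) ^+ 2 = a^+2 * X + c^+2 * Qs + 2*a*c * W.
  rewrite /X /Qs /W !mulr_sumr -!big_split; apply: eq_bigr => j _ /=; ring.
have E2 : \sum_(j < m.+3) P j * (P j + Q j) = X + W.
  rewrite /X /W -!big_split; apply: eq_bigr => j _ /=; ring.
have E3 : \sum_(j < m.+3) (P j + Q j) ^+ 2 = X + Qs + 2 * W.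
  rewrite /X /Qs /W mulr_sumr -!big_split; apply: eq_bigr => j _ /=; ring.
rewrite E1; rewrite E2 in h2; rewrite E3 in h3.
have ha0 : 0 <= a by lra.
have hs2 := sqr_sqrtr (ler0n R 2).
have hsq0 := sqrtr_ge0 (2 : R).
have ha22 : a ^+ 2 <= 2 by nra.
have hc0 : 0 <= c := sqrtr_ge0 _.
have hc2 : c ^+ 2 = 2 - a ^+ 2 by rewrite sqr_sqrtr // subr_ge0.
have hca : c <= a by nra.
have hs1 : a * c <= 1 by nra.
have p1 : 0 <= (1 - a * c) * (2 * X - 2) by apply: mulr_ge0; lra.
have p2 : 0 <= (a * c - c ^+ 2) * (2 * (X + W) - 2) by apply: mulr_ge0; nra.
have p3 : 0 <= c ^+ 2 * (X + Qs + 2 * W - 2) by apply: mulr_ge0; [exact: sqr_ge0 | lra].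
nra.
Qed.

Lemma lam (R : realType) (a : R) m : 1 < a -> a <= Num.sqrt 2 ->
  lambda1 (Dbasis m.+3 a) = Num.sqrt 2.
Proof.
move=> ha1 ha2.
have ha22 : a ^+ 2 <= 2.
  have hs2 := sqr_sqrtr (ler0n R 2); have hsq0 := sqrtr_ge0 (2 : R); nra.
have hc2 : abar a ^+ 2 = 2 - a ^+ 2 by rewrite sqr_sqrtr // subr_ge0.
rewrite /lambda1.
set B := Dbasis m.+3 a.
set E := (X in inf X).
have inE : E (Num.sqrt 2).
  exists (row 0 B); last first.
    rewrite /enorm; congr Num.sqrt.
    under eq_bigr => j _ do rewrite !mxE.
    rewrite (split3 _ (fun j => Dentry a 1 j.+1 ^+ 2)) big1 /Dentry /=.
      by rewrite expr0n /= !addr0 hc2; ring.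
    by move=> k _; rewrite expr0n.
  split.
    exists (fun i => if i == 0 then 1 else 0).
    rewrite (bigD1 ord0) //= big1 ?addr0 => [|i /negbTE ->]; last by rewrite scale0r.
    by rewrite scale1r.
  apply/eqP => /matrixP /(_ 0 0); rewrite !mxE /= /Dentry /= => h; lra.
have hlb : lbound E (Num.sqrt 2).
  move=> _ [v [[z hz] vnz] <-].
  rewrite /enorm ler_sqrt; last by apply: sumr_ge0 => j _; apply: sqr_ge0.
  rewrite hz.
  case: (boolP [exists i, z i != 0]) => [/existsP[i hi] | /existsPn h].
    by apply: key => //; exists i.
  exfalso; move/eqP: vnz; apply; rewrite hz big1 // => i _.
  by move: (h i); rewrite negbK => /eqP ->; rewrite scale0r.
apply/le_anti/andP; split.
  by apply: (ge_inf _ inE); exists (Num.sqrt 2).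
by apply: lb_le_inf => //; exists (Num.sqrt 2).
Qed.
Lemma det_D (R : realType) (a : R) m :
  \det (Dbasis m.+3 a) = (a ^+ 3 + abar a ^+ 3) * (- a) ^+ m.
Proof.
change (\det (Dbasis (3 + m) a) = (a ^+ 3 + abar a ^+ 3) * (- a) ^+ m).
set D := Dbasis (3 + m) a.
have hur : ursubmx D = 0.
  apply/matrixP => i j; rewrite !mxE /=.
  by rewrite !addSn add0n; case: i => [[|[|[|i]]] hi] //=.
rewrite -[D]submxK hur det_lblock.
congr (_ * _).
  rewrite (expand_det_row _ 0) !big_ord_recl big_ord0 /cofactor.
  rewrite !(expand_det_row _ 0) !big_ord_recl !big_ord0 /cofactor !det_mx11 !mxE /bump /= /Dentry /=.
  ring.
rewrite det_trig.
  under eq_bigr => i _ do rewrite !mxE /= !addSn add0n Dentry_dec eqxx /= (ltn_eqF (ltnSn i.+3)) /dr /= !addr0.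
  by rewrite prodr_const card_ord mulrN1.
apply/is_trig_mxP => i j hij; rewrite !mxE /= !addSn !add0n Dentry_dec /=.
by rewrite !ifF ?addr0 //; apply/eqP; lia.
Qed.

Theorem mainTheorem16 (R : realType) (n : nat) (a : R) :
  (3 <= n)%N -> 1 < a -> a <= Num.sqrt 2 ->
  center_density (Dbasis n a) =
  1 / (Num.sqrt 2 ^+ n * a ^+ (n - 3) * (a ^+ 3 + abar a ^+ 3)).
Proof.
move=> hn ha1 ha2.
case: n hn => [|[|[|m]]] // _.
rewrite /center_density /covol lam // det_D.
have -> : (m.+3 - 3 = m)%N by lia.
have hc0 : 0 <= abar a := sqrtr_ge0 _.
have ha0 : 0 < a by lra.
have hpos : 0 < a ^+ 3 + abar a ^+ 3.
  by apply: ltr_wpDr; [apply: exprn_ge0 | apply: exprn_gt0].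
rewrite normrM normrX normrN (gtr0_norm ha0) (gtr0_norm hpos).
have hs2 := sqr_sqrtr (ler0n R 2).
have hsp : 0 < Num.sqrt (2 : R) by rewrite sqrtr_gt0.
have -> : (2 : R) ^+ m.+3 = Num.sqrt 2 ^+ m.+3 * Num.sqrt 2 ^+ m.+3.
  by rewrite -exprMn -expr2 hs2.
have h1 : Num.sqrt (2 : R) ^+ m.+3 != 0 by rewrite expf_eq0 negb_and gt_eqF.
have h2 : a ^+ m != 0 by rewrite expf_eq0 negb_and gt_eqF ?orbT.
have h3 : a ^+ 3 + abar a ^+ 3 != 0 by rewrite gt_eqF.
field.
by rewrite h1 h2 h3.
Qed.
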